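(* If $r$ is a nonzero integer and $n$ is a positive integer, then the integer $F_r^2+F_rF_{r-1}-F_{r-1}^2$ divides both \[ F_r^{n+2}L_n+F_{r-1}F_r^{n+1}L_{n+1}+F_rF_{r-1}^{n+1}-2F_{r-1}^{n+2} \quad\text{and}\quad F_r^{n+2}F_n+F_{r-1}F_r^{n+1}F_{n+1}-F_rF_{r-1}^{n+1}. \]
   Context: $F_n$ and $L_n$ denote the Fibonacci and Lucas numbers, defined for all integers $n$ by $F_0=0,F_1=1$, $L_0=2,L_1=1$ and $x_n=x_{n-1}+x_{n-2}$; equivalently $F_n=(\alpha^n-\beta^n)/(\alpha-\beta)$, $L_n=\alpha^n+\beta^n$ with $\alpha=(1+\sqrt5)/2$, $\beta=(1-\sqrt5)/2$. In particular $F_{-n}=(-1)^{n-1}F_n$ and $L_{-n}=(-1)^nL_n$. *)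

(* Defs.v *)
From Stdlib Require Import ZArith List.
Import ListNotations.
Open Scope Z_scope.

Fixpoint fib_pair (n : nat) : Z * Z :=
  match n with
  | O => (0, 1)
  | S m => let (a, b) := fib_pair m in (b, a + b)
  end.
Definition fibN (n : nat) : Z := fst (fib_pair n).
Definition lucN (n : nat) : Z := 2 * fibN (S n) - fibN n. (* = F_{n-1}+F_{n+1} *)

Definition fib (n : Z) : Z :=
  if 0 <=? n then fibN (Z.to_nat n)
  else (-1) ^ (- n - 1) * fibN (Z.to_nat (- n)).
Definition luc (n : Z) : Z :=
  if 0 <=? n then lucN (Z.to_nat n)
  else (-1) ^ (- n) * lucN (Z.to_nat (- n)).

Example fib_chk : List.map fib (-5 :: -4 :: -1 :: 0 :: 1 :: 2 :: 7 :: nil)%Z = (5 :: -3 :: 1 :: 0 :: 1 :: 1 :: 13 :: nil)%Z.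
Proof. reflexivity. Qed.
Example luc_chk : List.map luc (-3 :: -2 :: 0 :: 1 :: 2 :: 3 :: 5 :: nil)%Z = (-4 :: 3 :: 2 :: 1 :: 3 :: 4 :: 11 :: nil)%Z.
Proof. reflexivity. Qed.

(* Main.v *)
Require Import Defs.
From Stdlib Require Import ZArith Lia.
Open Scope Z_scope.

Lemma fib_pair_eq m : fib_pair m = (fibN m, fibN (S m)).
Proof. unfold fibN; simpl. destruct (fib_pair m); reflexivity. Qed.

Lemma fibN_SS m : fibN (S (S m)) = fibN (S m) + fibN m.
Proof. unfold fibN at 1; simpl. rewrite fib_pair_eq. simpl. ring. Qed.

Lemma lucN_SS m : lucN (S (S m)) = lucN (S m) + lucN m.
Proof. unfold lucN. rewrite !fibN_SS. ring. Qed.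

Lemma powS (a : Z) (m : nat) : a ^ Z.of_nat (S m) = a * a ^ Z.of_nat m.
Proof. rewrite Nat2Z.inj_succ, Z.pow_succ_r by lia. ring. Qed.

Lemma key1 (a b : Z) : forall m,
  (a^2 + a*b - b^2 | a ^ Z.of_nat m * (a * fibN m + b * fibN (S m)) - b * b ^ Z.of_nat m).
Proof.
  assert (H : forall m,
    (a^2 + a*b - b^2 | a ^ Z.of_nat m * (a * fibN m + b * fibN (S m)) - b * b ^ Z.of_nat m) /\
    (a^2 + a*b - b^2 | a ^ Z.of_nat (S m) * (a * fibN (S m) + b * fibN (S (S m))) - b * b ^ Z.of_nat (S m))).
  { induction m as [|m [[k1 H1] [k2 H2]]].
    - split.
      + exists 0. change (Z.of_nat 0) with 0. rewrite !Z.pow_0_r. unfold fibN; cbn [fib_pair fst]. ring.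
      + exists 1. rewrite !powS. change (Z.of_nat 0) with 0. rewrite !Z.pow_0_r. unfold fibN; cbn [fib_pair fst]. ring.
    - split; [exists k2; exact H2|].
      rewrite !powS in *. rewrite !fibN_SS in *.
      exists (a * k2 + a^2 * k1 + b * b ^ Z.of_nat m).
      transitivity (a*(k2*(a^2 + a*b - b^2)) + a^2*(k1*(a^2 + a*b - b^2)) + b * b ^ Z.of_nat m*(a^2 + a*b - b^2)); [| ring].
      rewrite <- H1, <- H2. ring. }
  intro m; apply H.
Qed.

Lemma key2 (a b : Z) : forall m,
  (a^2 + a*b - b^2 | a * a ^ Z.of_nat m * (a * lucN m + b * lucN (S m)) - 2 * (b * b * b ^ Z.of_nat m) + a * (b * b ^ Z.of_nat m)).
Proof.
  assert (H : forall m,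
    (a^2 + a*b - b^2 | a * a ^ Z.of_nat m * (a * lucN m + b * lucN (S m)) - 2 * (b * b * b ^ Z.of_nat m) + a * (b * b ^ Z.of_nat m)) /\
    (a^2 + a*b - b^2 | a * a ^ Z.of_nat (S m) * (a * lucN (S m) + b * lucN (S (S m))) - 2 * (b * b * b ^ Z.of_nat (S m)) + a * (b * b ^ Z.of_nat (S m)))).
  { induction m as [|m [[k1 H1] [k2 H2]]].
    - split.
      + exists 2. change (Z.of_nat 0) with 0. rewrite !Z.pow_0_r. unfold lucN, fibN; cbn [fib_pair fst]. ring.
      + exists (a + 2*b). rewrite !powS. change (Z.of_nat 0) with 0. rewrite !Z.pow_0_r. unfold lucN, fibN; cbn [fib_pair fst]. ring.
    - split; [exists k2; exact H2|].
      rewrite !powS in *. rewrite !lucN_SS in *.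
      exists (a * k2 + a^2 * k1 + b * b ^ Z.of_nat m * (2*b - a)).
      transitivity (a*(k2*(a^2 + a*b - b^2)) + a^2*(k1*(a^2 + a*b - b^2)) + b * b ^ Z.of_nat m * (2*b - a)*(a^2 + a*b - b^2)); [| ring].
      rewrite <- H1, <- H2. ring. }
  intro m; apply H.
Qed.

Lemma fib_nat m : fib (Z.of_nat m) = fibN m.
Proof. unfold fib. rewrite (proj2 (Z.leb_le _ _)) by lia. now rewrite Nat2Z.id. Qed.
Lemma luc_nat m : luc (Z.of_nat m) = lucN m.
Proof. unfold luc. rewrite (proj2 (Z.leb_le _ _)) by lia. now rewrite Nat2Z.id. Qed.

Theorem mainTheorem5 (r n : Z) (hr : r <> 0) (hn : 0 < n) :
  let D := fib r ^ 2 + fib r * fib (r - 1) - fib (r - 1) ^ 2 in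
  (D | fib r ^ (n + 2) * luc n + fib (r - 1) * fib r ^ (n + 1) * luc (n + 1)
       + fib r * fib (r - 1) ^ (n + 1) - 2 * fib (r - 1) ^ (n + 2)) /\
  (D | fib r ^ (n + 2) * fib n + fib (r - 1) * fib r ^ (n + 1) * fib (n + 1)
       - fib r * fib (r - 1) ^ (n + 1)).
Proof.
  intro D. subst D.
  generalize (fib r) (fib (r - 1)). intros a b.
  assert (En : n = Z.of_nat (Z.to_nat n)) by lia.
  set (m := Z.to_nat n) in En. rewrite En.
  assert (E1 : Z.of_nat m + 1 = Z.of_nat (S m)) by lia.
  assert (E2 : Z.of_nat m + 2 = Z.of_nat (S (S m))) by lia.
  rewrite E1, E2, !fib_nat, !luc_nat, !powS.
  split.
  - destruct (key2 a b m) as [k Hk]. exists k. rewrite <- Hk. ring.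
  - destruct (key1 a b m) as [k Hk]. exists (a * k).
    transitivity (a * (k * (a^2 + a*b - b^2))); [| ring]. rewrite <- Hk. ring.
Qed.
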